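(* Assume $\gamma=0$ and that $r$ is not a root of unity. Let $I$ be a two-sided ideal of $L$, $x\in I$, and $x=\sum_{i\in\mathbb Z}x_i$ ($x_i\in L_i$) its homogeneous decomposition, with length $\ell(x)=\#\{i: x_i\neq0\}\ge1$. Then $x_ih^{\ell(x)-1}\in I$ for all $i\in\mathbb Z$.
   Context: Let $r,s\in\mathbb C^\times$ and $\phi\in\mathbb C[x]$; $L=L(\phi,r,s,0)$ is the associative $\mathbb C$-algebra generated by $u,d,h$ subject to $hu=ruh$, $dh=rhd$, $du-sud=\phi(h)$. $L$ is $\mathbb Z$-graded by $\deg u=1,\deg d=-1,\deg h=0$, and $L_i$ is the degree-$i$ component (so $hx_i=r^ix_ih$ for $x_i\in L_i$). *)

(* Defs.v *)
From HB Require Import structures.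
From mathcomp Require Import all_boot all_order all_algebra.
Set Implicit Arguments. Unset Strict Implicit. Unset Printing Implicit Defensive.
Import Order.TTheory GRing.Theory Num.Theory.
Local Open Scope ring_scope.

Inductive letter := LU | LD | LH.

Definition letter_eqb (a b : letter) : bool :=
  match a, b with LU, LU | LD, LD | LH, LH => true | _, _ => false end.
Lemma letter_eqP : Equality.axiom letter_eqb.
Proof. by case; case; constructor. Qed.
HB.instance Definition _ := hasDecEq.Build letter letter_eqP.

Definition gen (A : nzRingType) (u d h : A) (c : letter) : A :=
  match c with LU => u | LD => d | LH => h end.

Definition word_eval (A : nzRingType) (u d h : A) (w : seq letter) : A :=
  \prod_(c <- w) gen u d h c.

Definition word_deg (w : seq letter) : int :=
  (count (pred1 LU) w)%:Z - (count (pred1 LD) w)%:Z.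

Definition poly_at (K : fieldType) (A : algType K) (phi : {poly K}) (a : A) : A :=
  \sum_(i < size phi) phi`_i *: a ^+ i.

(* The defining relations of L(phi, r, s, 0). *)
Definition down_up_rel (K : fieldType) (A : algType K) (phi : {poly K}) (r s : K)
  (u d h : A) : Prop :=
  [/\ h * u = r *: (u * h), d * h = r *: (h * d)
    & d * u - s *: (u * d) = poly_at phi h].

Definition is_alg_hom (K : fieldType) (A B : algType K) (f : A -> B) : Prop :=
  [/\ forall a b, f (a + b) = f a + f b,
      forall a b, f (a * b) = f a * f b,
      f 1 = 1
    & forall (k : K) a, f (k *: a) = k *: f a].

(* (A, u, d, h) is the algebra presented by generators u, d, h and the
   relations of L(phi, r, s, 0): it satisfies the relations and is initial
   (universal) among K-algebras with three elements satisfying them. *)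
Definition is_down_up_algebra (K : fieldType) (A : algType K) (phi : {poly K})
  (r s : K) (u d h : A) : Prop :=
  down_up_rel phi r s u d h /\
  forall (B : algType K) (u' d' h' : B), down_up_rel phi r s u' d' h' ->
    exists f : A -> B,
      [/\ is_alg_hom f, f u = u', f d = d', f h = h'
        & forall g : A -> B, is_alg_hom g -> g u = u' -> g d = d' -> g h = h' ->
            forall a, g a = f a].

Definition homog (K : fieldType) (A : algType K) (u d h : A) (i : int) (x : A) : Prop :=
  exists s : seq (K * seq letter),
    all (fun p => word_deg p.2 == i) s /\
    x = \sum_(p <- s) p.1 *: word_eval u d h p.2.

Definition twosided_ideal (R : nzRingType) (I : {pred R}) : Prop :=
  [/\ 0 \in I, forall x y, x \in I -> y \in I -> x + y \in I
    & forall a b x, x \in I -> a * x * b \in I].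

(* Main.v *)
Require Import Defs.
From HB Require Import structures.
From mathcomp Require Import all_boot all_order all_algebra.
Import GRing.Theory.
Local Open Scope ring_scope.

Lemma rpow_inj (K : fieldType) (r : K) : r != 0 ->
  (forall n : nat, (0 < n)%N -> r ^+ n != 1) ->
  forall i j : int, i != j -> r ^ i - r ^ j != 0.
Proof.
move=> r0 hr i j ij; rewrite subr_eq0; apply/eqP => E.
have E1 : r ^ (i - j) = 1.
  have : r ^ j * r ^ (i - j) = r ^ j * 1.
    by rewrite -expfzDr // addrC subrK E mulr1.
  by move/mulfI; apply; rewrite expfz_eq0 negb_and r0 orbT.
move: E1 ij; rewrite -subr_eq0; case: (i - j) => [n|n] /=.
  case: n => [|n] H nz; first by [].
  by move: H; apply/eqP; apply: hr.
move=> H _; move: H; rewrite NegzE -exprz_inv -exprnP exprVn => /eqP; rewrite invr_eq1; apply/negP; exact: hr.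
Qed.


Definition ldeg (c : letter) : int := match c with LU => 1 | LD => -1 | LH => 0 end.

Lemma word_deg_cons c w : word_deg (c :: w) = ldeg c + word_deg w.
Proof.
rewrite /word_deg /=; case: c => /=; rewrite ?add0n ?add1n.
- by rewrite -addn1 PoszD addrAC addrC.
- by rewrite -addn1 PoszD opprD addrA addrC.
- by rewrite add0r.
Qed.

Lemma word_comm (K : fieldType) (phi : {poly K}) (r s : K) (A : algType K) (u d h : A) :
  r != 0 -> down_up_rel phi r s u d h ->
  forall w, h * word_eval u d h w = r ^ word_deg w *: (word_eval u d h w * h).
Proof.
move=> r0 [hu dh _]; elim => [|c w IH].
  by rewrite /word_eval big_nil mul1r mulr1 /word_deg /= expr0z scale1r.
have hc : h * gen u d h c = r ^ ldeg c *: (gen u d h c * h).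
  case: c => /=.
  - by rewrite expr1z.
  - rewrite dh scalerA.
    have -> : r ^ (-1) * r = 1 by rewrite exprN1 mulVf.
    by rewrite scale1r.
  - by rewrite expr0z scale1r.
rewrite /word_eval big_cons -/(word_eval u d h w) word_deg_cons expfzDr //.
rewrite mulrA hc -scalerAl -(mulrA _ h) IH -scalerAr scalerA.
by rewrite mulrA.
Qed.

Lemma homog_comm (K : fieldType) (phi : {poly K}) (r s : K) (A : algType K) (u d h : A) :
  r != 0 -> down_up_rel phi r s u d h ->
  forall i y, homog u d h i y -> h * y = r ^ i *: (y * h).
Proof.
move=> r0 rel i y [sq [Hall ->]].
rewrite mulr_sumr mulr_suml scaler_sumr big_seq [RHS]big_seq.
apply: eq_bigr => p pin.
have /eqP <- := allP Hall p pin.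
by rewrite -scalerAr (@word_comm _ phi r s _ u d h r0 rel) -scalerAl !scalerA mulrC.
Qed.

Lemma idealZ (K : fieldType) (A : algType K) (I : {pred A}) :
  twosided_ideal I -> forall (k : K) x, x \in I -> k *: x \in I.
Proof. by case=> _ _ HM k x xI; rewrite -mulr_algl -[_ * x]mulr1; apply: HM. Qed.

Lemma key (K : fieldType) (A : algType K) (r : K) (h : A) (I : {pred A}) :
  r != 0 -> (forall n : nat, (0 < n)%N -> r ^+ n != 1) -> twosided_ideal I ->
  forall (n : nat) (S : seq int) (xc : int -> A), size S = n.+1 -> uniq S ->
  (forall k, k \in S -> h * xc k = r ^ k *: (xc k * h)) ->
  \sum_(k <- S) xc k \in I -> forall i, i \in S -> xc i * h ^+ n \in I.
Proof.
move=> r0 hr HI; have [I0 ID IM] := HI.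
elim=> [|n IH] S xc.
  case: S => [|k [|]] //= _ _ _; rewrite big_seq1 => xI i; rewrite inE => /eqP ->.
  by rewrite expr0 mulr1.
move=> sS uS hS xI i iS.
have [j jrem] : exists j, j \in rem i S.
  case E: (rem i S) => [|j t]; last by exists j; rewrite mem_head.
  by move: (size_rem iS); rewrite E sS.
rewrite mem_rem_uniq // in jrem; case/andP: jrem => ji jS.
set S'' := rem j S.
have sS'' : size S'' = n.+1 by rewrite size_rem // sS.
have uS'' : uniq S'' by apply: rem_uniq.
have iS'' : i \in S'' by rewrite mem_rem_uniq // inE iS andbT eq_sym.
set xc' := fun k => (r ^ k - r ^ j) *: (xc k * h).
have hS'' : forall k, k \in S'' -> h * xc' k = r ^ k *: (xc' k * h).
  move=> k; rewrite mem_rem_uniq // inE => /andP [_ kS].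
  rewrite /xc' -scalerAr mulrA hS // -!scalerAl scalerA mulrC -scalerA.
  by [].
have yI : \sum_(k <- S'') xc' k \in I.
  have -> : \sum_(k <- S'') xc' k = h * (\sum_(k <- S) xc k) * 1
      + (-1) *: ((r ^ j)%:A * (\sum_(k <- S) xc k) * h).
    have -> : \sum_(k <- S'') xc' k = \sum_(k <- S) xc' k.
      by rewrite [in RHS](perm_big _ (perm_to_rem jS)) big_cons /xc' /= (subrr (r ^ j)) scale0r add0r.
    rewrite mulr1 mulr_algl scaleN1r -scalerAl mulr_sumr mulr_suml scaler_sumr.
    rewrite -sumrN -big_split /=.
    rewrite big_seq [RHS]big_seq; apply: eq_bigr => k kS.
    by rewrite /xc' hS // scalerBl.
  apply: ID; first exact: IM.
  exact: (@idealZ K A I HI (-1) _ (IM _ _ _ xI)).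
have := IH S'' xc' sS'' uS'' hS'' yI i iS''.
rewrite /xc' -scalerAl -mulrA -exprS => /(@idealZ K A I HI ((r ^ i - r ^ j)^-1) _).
rewrite scalerA mulVf ?scale1r //.
by apply: rpow_inj => //; rewrite eq_sym.
Qed.

Theorem mainTheorem9 (K : fieldType) (phi : {poly K}) (r s : K)
  (A : algType K) (u d h : A) :
  r != 0 -> s != 0 ->
  is_down_up_algebra phi r s u d h ->
  (forall n : nat, (0 < n)%N -> r ^+ n != 1) ->
  forall (I : {pred A}), twosided_ideal I ->
  forall (x : A) (xc : int -> A) (S : seq int),
    x \in I ->
    uniq S ->
    (forall i, i \in S -> xc i != 0) ->
    (forall i, i \notin S -> xc i = 0) ->
    (forall i, homog u d h i (xc i)) ->
    x = \sum_(i <- S) xc i ->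
    (1 <= size S)%N ->
    forall i : int, xc i * h ^+ (size S).-1 \in I.
Proof.
move=> r0 _ [rel _] hr I HI x xc S xI uS _ out hom xE sS i.
have [iS|iS] := boolP (i \in S); last first.
  by rewrite out // mul0r; case: HI.
apply: (@key K A r h I r0 hr HI (size S).-1 S xc) => //.
- by rewrite prednK.
- by move=> k _; apply: (@homog_comm K phi r s A u d h r0 rel).
- by rewrite -xE.
Qed.
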